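(* There exist a measurable space $(X,\Sigma)$ and a transition function $p$ on it (with countably additive $p(x,\cdot)$) whose associated operator $A$ on $ba(X,\Sigma)$ has a cycle of measures $K=\{\mu_1,\dots,\mu_m\}$ of period $m\ge 2$ all of whose cyclic measures are purely finitely additive.
   Context: $X$ is an infinite set and $\Sigma$ a $\sigma$-algebra of subsets of $X$ containing all one-point sets. $ba(X,\Sigma)$ denotes the space of bounded finitely additive real-valued measures on $\Sigma$. A nonnegative finitely additive measure $\mu$ is purely finitely additive if every countably additive measure $\lambda$ with $0\le\lambda\le\mu$ is identically zero. A transition function is a map $p(x,E)$ with $0\le p(x,E)\le 1$, $p(x,X)=1$, $p(\cdot,E)$ bounded $\Sigma$-measurable for every $E\in\Sigma$, and $p(x,\cdot)$ countably additive for every $x\in X$. The Markov operator is $A\mu(E)=\int_X p(x,E)\,\mu(dx)$. A cycle of measures of $A$ is a finite numbered set $\{\mu_1,\dots,\mu_m\}$ of pairwise different positive finitely additive measures with $A\mu_i=\mu_{i+1}$ ($1\le i\le m-1$) and $A\mu_m=\mu_1$; $m$ is its period. *)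

(* Defs.v *)
From HB Require Import structures.
From mathcomp Require Import all_boot all_order all_algebra.
From mathcomp Require Import all_classical all_reals all_analysis.
Set Implicit Arguments. Unset Strict Implicit. Unset Printing Implicit Defensive.
Import Order.TTheory GRing.Theory Num.Theory numFieldNormedType.Exports.
Local Open Scope classical_set_scope.
Local Open Scope ring_scope.

Section Defs.
Context {d : measure_display} {T : measurableType d} {R : realType}.

Definition fin_additive (mu : set T -> R) : Prop :=
  mu set0 = 0 /\
  forall A B, measurable A -> measurable B -> A `&` B = set0 ->
    mu (A `|` B) = mu A + mu B.

(* positive (nonnegative) finitely additive measure; such a measure is
   automatically bounded by mu setT, hence an element of ba(X,Sigma) *)
Definition pos_fa_measure (mu : set T -> R) : Prop :=
  fin_additive mu /\ forall A, measurable A -> 0 <= mu A.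

Definition countably_additive (mu : set T -> R) : Prop :=
  forall F : nat -> set T, (forall n, measurable (F n)) -> trivIset setT F ->
    (fun n => \sum_(i < n) mu (F i)) @ \oo --> mu (\bigcup_n F n).

Definition purely_fin_additive (mu : set T -> R) : Prop :=
  pos_fa_measure mu /\
  forall lam : set T -> R, fin_additive lam -> countably_additive lam ->
    (forall A, measurable A -> 0 <= lam A <= mu A) ->
    forall A, measurable A -> lam A = 0.

Definition simple_eval (s : seq (R * set T)) (x : T) : R :=
  \sum_(ce <- s) ce.1 * \1_(ce.2) x.

Definition simple_sum (mu : set T -> R) (s : seq (R * set T)) : R :=
  \sum_(ce <- s) ce.1 * mu ce.2.

(* integral of a bounded Sigma-measurable f against a positive finitely
   additive measure mu: supremum of integrals of Sigma-simple minorants *)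
Definition fa_integral (mu : set T -> R) (f : T -> R) : R :=
  sup [set simple_sum mu s | s in
        [set s : seq (R * set T) | (forall ce, ce \in s -> measurable ce.2) /\
                                   forall x, simple_eval s x <= f x]].

Definition transition_function (p : T -> set T -> R) : Prop :=
  (forall x E, measurable E -> 0 <= p x E <= 1) /\
  (forall x, p x setT = 1) /\
  (forall E, measurable E -> measurable_fun setT (fun x => p x E)) /\
  (forall x, fin_additive (p x) /\ countably_additive (p x)).

Definition markov_op (p : T -> set T -> R) (mu : set T -> R) : set T -> R :=
  fun E => fa_integral mu (fun x => p x E).

Definition meq (mu nu : set T -> R) : Prop :=
  forall E, measurable E -> mu E = nu E.

Definition cycle_of_measures (p : T -> set T -> R) (m : nat)
    (mu : nat -> set T -> R) : Prop :=
  (0 < m)%N /\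
  (forall i, (i < m)%N -> pos_fa_measure (mu i)) /\
  (forall i j, (i < j < m)%N -> ~ meq (mu i) (mu j)) /\
  (forall i, (i.+1 < m)%N -> meq (markov_op p (mu i)) (mu i.+1)) /\
  meq (markov_op p (mu m.-1)) (mu 0%N).

End Defs.

(* Main.v *)
Require Import Defs.
From HB Require Import structures.
From mathcomp Require Import all_boot all_order all_algebra.
From mathcomp Require Import all_classical all_reals all_analysis.
From mathcomp Require Import zify.
Import Order.TTheory GRing.Theory Num.Theory.
Local Open Scope classical_set_scope.
Local Open Scope ring_scope.
Set Implicit Arguments. Unset Strict Implicit.

Record ultra (Q : set (set nat)) : Prop := {
  uT : Q setT; u0 : ~ Q set0; uI : forall A B, Q A -> Q B -> Q (A `&` B);
  uS : forall A B, A `<=` B -> Q A -> Q B; uC : forall A, Q A \/ Q (~` A);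
  un : forall n, ~ Q [set n] }.

Lemma ultra_ex : exists Q, ultra Q.
Proof.
have [G [GU sub]] := ultraFilterLemma (@eventually_filter).
exists G; split.
- exact: filterT.
- exact: (@filter_not_empty _ G (@ultra_proper _ _ GU)).
- by move=> A B; apply: filterI.
- by move=> A B; apply: filterS.
- by move=> A; apply: in_ultra_setVsetC.
- move=> n Gn.
  have Gc : G (~` [set n]).
    by apply: sub; exists n.+1 => // k /= Hk Hkn; move: Hk; rewrite Hkn ltnn.
  have := filterI Gn Gc; rewrite setICr => H; apply: (@filter_not_empty _ G _); exact: H.
Qed.

Lemma ultra_ne Q X : ultra Q -> Q X -> exists x, X x.
Proof.
move=> U QX; apply: contrapT => nX; apply: (u0 U).
suff <- : X = set0 by [].
by apply/seteqP; split => // x Xx; apply: nX; exists x.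
Qed.

Lemma ultra_notC Q X : ultra Q -> Q X -> ~ Q (~` X).
Proof. by move=> U QX QC; apply: (u0 U); rewrite -(setICr X); apply: (uI U). Qed.

Definition um {R : realType} (Q : set (set nat)) (E : set nat) : R :=
  if `[< Q E >] then 1 else 0.

Definition swap (n : nat) : nat := if odd n then n.-1 else n.+1.

Lemma swapK : involutive swap.
Proof. move=> n; rewrite /swap; case: n => [|n] //=; case h: (odd n) => /=; rewrite ?h //=. Qed.

Definition Qs (Q : set (set nat)) : set (set nat) := fun E => Q (swap @^-1` E).

Lemma ultra_swap Q : ultra Q -> ultra (Qs Q).
Proof.
move=> U; split; rewrite /Qs.
- by rewrite preimage_setT; apply: (uT U).
- by rewrite preimage_set0; apply: (u0 U).
- by move=> A B QA QB; rewrite preimage_setI; apply: (uI U).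
- by move=> A B AB; apply: (uS U) => x /= /AB.
- by move=> A; rewrite preimage_setC; apply: (uC U).
- move=> n; have -> : swap @^-1` [set n] = [set swap n].
    apply/seteqP; split => x /=; first by move=> <-; rewrite swapK.
    by move=> ->; rewrite swapK.
  exact: (un U).
Qed.
Section S.
Variable R : realType.

Lemma um01 Q E : ultra Q -> (@um R Q E = 1 /\ Q E) \/ (@um R Q E = 0 /\ Q (~` E)).
Proof.
move=> U; rewrite /um; case: (uC U E) => h.
  by left; rewrite asboolT.
right; rewrite asboolF // => QE; exact: (ultra_notC U QE h).
Qed.

Lemma simple_ultra Q (s : seq (R * set nat)) : ultra Q ->
  exists S, Q S /\ forall x, S x -> simple_eval s x = simple_sum (@um R Q) s.
Proof.
move=> U; elim: s => [|[c A] s [S [QS HS]]].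
  by exists setT; split; [exact: (uT U)|move=> x _; rewrite /simple_eval /simple_sum !big_nil].
case: (um01 A U) => [[uA QA]|[uA QA]].
  exists (S `&` A); split; first exact: (uI U).
  move=> x [Sx Ax]; rewrite /simple_eval /simple_sum !big_cons /=.
  rewrite -/(simple_eval s x) -/(simple_sum _ s) HS // uA indicE mem_set //.
exists (S `&` ~` A); split; first exact: (uI U).
move=> x [Sx Ax]; rewrite /simple_eval /simple_sum !big_cons /=.
rewrite -/(simple_eval s x) -/(simple_sum _ s) HS // uA indicE memNset //.
Qed.

Lemma integral_ultra Q (B : set nat) : ultra Q ->
  fa_integral (@um R Q) (\1_B) = um Q B.
Proof.
move=> U; rewrite /fa_integral.
set E := [set _ | _ in _].
have EB : E (um Q B).
  exists [:: (1, B)]; last by rewrite /simple_sum big_cons big_nil /= mul1r addr0.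
  split => // x; rewrite /simple_eval big_cons big_nil /= mul1r addr0 //.
have ub : ubound E (um Q B).
  move=> z [s [_ Hs] <-].
  have [S [QS HS]] := simple_ultra s U.
  case: (um01 B U) => [[uB QB]|[uB QB]].
    have [x [Sx Bx]] := ultra_ne U (uI U QS QB).
    by rewrite -(HS x Sx) uB; apply: le_trans (Hs x) _; rewrite indicE mem_set.
  have [x [Sx Bx]] := ultra_ne U (uI U QS QB).
  by rewrite -(HS x Sx) uB; apply: le_trans (Hs x) _; rewrite indicE memNset.
apply/le_anti/andP; split.
  by apply: ge_sup => //; exists (um Q B).
by apply: sup_upper_bound => //; split; [exists (um Q B)|exists (um Q B)].
Qed.

Lemma um1 Q X Y : ultra Q -> Q X -> X `<=` Y -> @um R Q Y = 1.
Proof. by move=> U QX XY; rewrite /um asboolT //; exact: (uS U XY QX). Qed.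

Lemma um0 Q X Y : ultra Q -> Q (~` X) -> Y `<=` X -> @um R Q Y = 0.
Proof.
move=> U QX YX; rewrite /um asboolF // => QY.
exact: (ultra_notC U (uS U YX QY) QX).
Qed.

Lemma um_pos Q : ultra Q -> pos_fa_measure (@um R Q).
Proof.
move=> U; split; last by move=> A _; rewrite /um; case: asboolP.
split; first by rewrite /um asboolF //; exact: (u0 U).
move=> A B _ _ AB0.
case: (um01 A U) => [[uA QA]|[uA QA]]; case: (um01 B U) => [[uB QB]|[uB QB]].
- by exfalso; apply: (u0 U); rewrite -AB0; exact: (uI U).
- by rewrite uA uB addr0; apply: (um1 U QA) => x Ax; left.
- by rewrite uA uB add0r; apply: (um1 U QB) => x Ax; right.
- rewrite uA uB addr0; apply: (@um0 _ (A `|` B) _ U) => //.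
  by rewrite setCU; exact: (uI U).
Qed.

Lemma um_pure Q : ultra Q -> purely_fin_additive (@um R Q).
Proof.
move=> U; split; first exact: um_pos.
move=> lam _ lamca lamb A _.
pose F i := A `&` [set i].
have F0 i : lam (F i) = 0.
  have /andP[h1 h2] := lamb (F i) I.
  apply/le_anti/andP; split => //.
  rewrite (@um0 _ [set i] _ U) // in h2 => [|x [_ ->] //].
  by case: (uC U [set i]) => // /(un U).
have tF : trivIset setT F.
  by move=> i j _ _ [x [[_ xi] [_ xj]]]; rewrite -xi -xj.
have Hc := lamca F (fun=> I) tF.
have E1 : \bigcup_n F n = A.
  by apply/seteqP; split => [x [n _ [] //]|x Ax]; exists x => //.
have E2 : (fun n => \sum_(i < n) lam (F i)) = fun=> 0.
  by apply/funext => n; rewrite big1.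
rewrite E1 E2 in Hc.
by rewrite -(cvg_lim _ Hc) ?lim_cst.
Qed.

Lemma dirac_fa (y : nat) : fin_additive (fun E => (\1_E y : R)).
Proof.
split; first by rewrite indicE memNset.
move=> A B _ _ AB0; rewrite !indicE.
have [Ay|nAy] := pselect (A y); have [By|nBy] := pselect (B y).
- by exfalso; have : (A `&` B) y by []; rewrite AB0.
- rewrite mem_set; last by left. by rewrite mem_set // memNset // addr0.
- rewrite mem_set; last by right. by rewrite memNset // mem_set // add0r.
- by rewrite !memNset ?addr0 // => -[].
Qed.

Lemma dirac_ca (y : nat) : countably_additive (fun E => (\1_E y : R)).
Proof.
move=> F _ tF.
have [[k Fk]|nF] := pselect (exists k, F k y).
  have Fi i : i != k -> ~ F i y.
    move=> ik Fi; move/eqP: ik; apply; apply: (tF i k I I); exists y; split.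
    exact: Fi. exact: Fk.
  have Hs n : \sum_(i < n) (\1_(F i) y : R) = (k < n)%:R.
    elim: n => [|n IH]; first by rewrite big_ord0.
    rewrite big_ord_recr /= IH indicE.
    have [->|nk] := eqVneq n k.
      by rewrite mem_set // ltnn ltnSn add0r.
    rewrite memNset ?addr0; last exact: Fi.
    by rewrite (ltnS k n) (leq_eqVlt k n) eq_sym (negbTE nk).
  rewrite indicE mem_set; last by exists k.
  apply: cvg_near_cst; exists k.+1 => // n /= kn.
  by rewrite Hs kn.
rewrite indicE memNset; last by move=> [k _ Fk]; apply: nF; exists k.
have -> : (fun n => \sum_(i < n) (\1_(F i) y : R)) = fun=> 0.
  apply/funext => n; rewrite big1 // => i _; rewrite indicE memNset //.
  by move=> Fi; apply: nF; exists i.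
exact: cvg_cst.
Qed.
End S.

Lemma odd_swap x : odd (swap x) = ~~ odd x.
Proof. by rewrite /swap; case: x => [|x] //=; case h: (odd x) => /=; rewrite ?h. Qed.

Theorem proposition4p1 (R : realType) :
  exists (d : measure_display) (T : measurableType d)
         (p : T -> set T -> R) (m : nat) (mu : nat -> set T -> R),
    infinite_set [set: T] /\
    (forall x : T, measurable [set x]) /\
    transition_function p /\
    (2 <= m)%N /\
    cycle_of_measures p m mu /\
    (forall i, (i < m)%N -> purely_fin_additive (mu i)).
Proof.
have [Q U] := ultra_ex.
have Us := ultra_swap U.
have hp Q' E : ultra Q' -> markov_op (fun x E => (\1_E (swap x) : R)) (um Q') E
    = um Q' (swap @^-1` E).
  move=> U'; rewrite /markov_op -(integral_ultra _ _ U'); congr fa_integral.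
exists default_measure_display, nat, (fun x E => (\1_E (swap x) : R)), 2%N,
  (fun i => if i == 0 then um Q else um (Qs Q)).
split; first exact: infinite_nat.
split; first by [].
split.
  split; first by move=> x E _; rewrite indicE; case: (_ \in _); rewrite ?ler01 ?lexx.
  split; first by move=> x; rewrite indicE mem_set.
  split; first by move=> E _ _ Y _.
  by move=> x; split; [exact: dirac_fa|exact: dirac_ca].
split; first by [].
split.
  split; first by [].
  split; first by move=> [|[|i]] //= _; apply: um_pos.
  split.
    move=> i j /andP[ij j2]; have [-> ->] : i = 0%N /\ j = 1%N by lia.
    move=> /= Heq.
    pose Ev := [set n : nat | ~~ odd n].
    have := Heq Ev I; rewrite /=.
    have EE : swap @^-1` Ev = ~` Ev.
      by apply/seteqP; split => x /=; rewrite /Ev /= odd_swap; case: (odd x) => //= ; apply.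
    have -> : um (Qs Q) Ev = um Q (~` Ev) :> R by rewrite /um /Qs EE.
    case: (@um01 R _ Ev U) => [[uE QE]|[uE QE]]; case: (@um01 R _ (~` Ev) U) => [[uC QC]|[uC QC]].
    - by exfalso; exact: (ultra_notC U QE QC).
    - by rewrite uE uC => /eqP; rewrite oner_eq0.
    - by rewrite uE uC => /esym/eqP; rewrite oner_eq0.
    - by rewrite setCK in QC; exfalso; exact: (ultra_notC U QC QE).
  split.
    move=> [|i] //= _ E _; rewrite hp //.
  move=> E _ /=; rewrite hp //.
  have EE : swap @^-1` (swap @^-1` E) = E.
    by apply/seteqP; split => x /=; rewrite swapK.
  by rewrite /um /Qs EE.
by move=> [|[|i]] //= _; apply: um_pure.
Qed.
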